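(* Let $n=p_1^{r_1}p_2^{r_2}\cdots p_k^{r_k}$, where $k\ge1$, $p_1,\ldots,p_k$ are distinct primes and $r_1\ge r_2\ge\cdots\ge r_k\ge1$. If $n$ is not prime, then $$F(G(n))=\sum_{\substack{i_1<i_2<\cdots<i_s\\ \emptyset\ne\{i_1,\ldots,i_s\}\subseteq\{1,\ldots,k\}}} r_{i_1}r_{i_2}\cdots r_{i_s}\,x_{i_1}x_{i_2}\cdots x_{i_s}.$$ If $n$ is prime, then $F(G(n))=1$.
   Context: For an integer $n\ge2$, $G(n)$ is the simple undirected graph whose vertex set is the set of divisors of $n$ greater than $1$, two distinct vertices $a,b$ adjacent iff $\gcd(a,b)>1$. A clique is a set of pairwise adjacent vertices; a set $S$ of cliques of $G$ is a total clique covering if every vertex lies in some member of $S$ and every edge has both endpoints in some member of $S$; $\theta_t(G)$ is the minimum size of a total clique covering. The code $\sigma(G)$ of a graph $G$ with $m$ vertices and $s\ge0$ isolated vertices: let $k'=\theta_t(G)-s$; for each total clique covering $S=\{C_1,\ldots,C_{s+k'}\}$ with $|S|=\theta_t(G)$ (where $C_1,\ldots,C_s$ are the singletons of the isolated vertices) and each bijective assignment of the first $k'$ primes to $C_{s+1},\ldots,C_{s+k'}$, label each isolated vertex by $1$ and each other vertex $v$ by the product of primes assigned to the cliques among $C_{s+1},\ldots,C_{s+k'}$ containing $v$, and list the labels in non-decreasing order; $\sigma[S]$ is the lexicographically least sequence so obtained from $S$, and $\sigma(G)$ is the lexicographically least among all $\sigma[S]$ with $|S|=\theta_t(G)$. The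 normal polynomial representation $F(G)\in\mathbb{Z}_{\ge0}[x_1,x_2,\ldots]$ is $\sum_{\lambda} m(\lambda)$, summed over the entries $\lambda$ of $\sigma(G)$ (with multiplicity), where $m(1)=1$ and $m(q_{j_1}q_{j_2}\cdots q_{j_r})=x_{j_1}x_{j_2}\cdots x_{j_r}$ for distinct indices $j_1,\ldots,j_r$, $q_j$ denoting the $j$-th prime. *)

(* Defs.v *)
From HB Require Import structures.
From mathcomp Require Import all_boot all_order all_algebra.
From mathcomp Require Import fingroup perm.
From mathcomp Require Import mpoly.

Set Implicit Arguments.
Unset Strict Implicit.
Unset Printing Implicit Defensive.

Import GRing.Theory.
Local Open Scope ring_scope.

(* Primes q_1 < q_2 < ... ; we index from 0:  nth_prime j = q_(j+1).        *)

Lemma next_prime_ex (p : nat) : exists q, ((p < q) && prime q)%N.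
Proof. by case: (prime_above p) => q h1 h2; exists q; rewrite h1 h2. Qed.

Definition next_prime (p : nat) : nat := ex_minn (next_prime_ex p).

Fixpoint nth_prime (j : nat) : nat :=
  if j is j'.+1 then next_prime (nth_prime j') else 2%N.

(* Simple graphs: vertex set V : {set T} inside a finType T, adjacency e     *)
(* (only used on pairs of distinct vertices of V).                           *)

Section Graphs.
Variables (T : finType) (V : {set T}) (e : rel T).

Definition is_clique (C : {set T}) : bool :=
  (C \subset V) && [forall x in C, forall y in C, (x != y) ==> e x y].

Definition is_edge (x y : T) : bool :=
  [&& x \in V, y \in V, x != y & e x y].

Definition total_clique_covering (S : {set {set T}}) : bool :=
  [&& [forall C in S, is_clique C],
      [forall v in V, exists C in S, v \in C] &
      [forall x, forall y, is_edge x y ==> [exists C in S, (x \in C) && (y \in C)]]].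

Definition min_tcc (S : {set {set T}}) : bool :=
  total_clique_covering S &&
  [forall S' : {set {set T}}, total_clique_covering S' ==> (#|S| <= #|S'|)%N].

Definition isolated (v : T) : bool := (v \in V) && [forall u, ~~ is_edge v u].

(* the cliques C_(s+1), ..., C_(s+k') : S minus the singletons of isolated
   vertices *)
Definition nonisolated_cliques (S : {set {set T}}) : {set {set T}} :=
  S :\: [set [set v] | v in [set v | isolated v]].

(* label of v for the assignment: i-th clique of enum S' gets prime q_(s i + 1) *)
Definition label (S : {set {set T}}) (s : 'S_(size (enum (nonisolated_cliques S))))
    (v : T) : nat :=
  if isolated v then 1%N
  else (\prod_(i < size (enum (nonisolated_cliques S))
              | v \in nth set0 (enum (nonisolated_cliques S)) i)
          nth_prime (s i))%N.

Definition code_of (S : {set {set T}}) s : seq nat :=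
  sort leq [seq label (S := S) s v | v <- enum V].

(* all sequences obtained from minimum total clique coverings and bijective
   assignments of the first k' primes (every bijection is given by a
   permutation s of the indices of enum S') *)
Definition all_codes : seq (seq nat) :=
  flatten [seq [seq code_of (S := Cov) s
             | s <- enum [set: 'S_(size (enum (nonisolated_cliques Cov)))]]
          | Cov <- enum [set Cov : {set {set T}} | min_tcc Cov]].

End Graphs.

Fixpoint lexle (s t : seq nat) : bool :=
  match s, t with
  | [::], _ => true
  | _ :: _, [::] => false
  | a :: s', b :: t' => (a < b)%N || ((a == b) && lexle s' t')
  end.

Definition lexmin (cs : seq (seq nat)) : seq nat :=
  foldr (fun c m => if lexle c m then c else m) (head [::] cs) cs.

Definition code (T : finType) (V : {set T}) (e : rel T) : seq nat :=
  lexmin (all_codes V e).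

(* Normal polynomial representation.  F(G) lives in Z[x_1, x_2, ...]; we     *)
(* represent it through its images in {mpoly int[N]} under the ring map      *)
(* x_j |-> 'X_(j-1) for j <= N and x_j |-> 0 for j > N.                      *)
(* m(q_(j1) ... q_(jr)) = x_(j1) ... x_(jr), m(1) = 1.                        *)

Definition monomial_N (N : nat) (lam : nat) : {mpoly int[N]} :=
  \prod_(p <- primes lam) \sum_(i < N | nth_prime i == p) 'X_i.

Definition normal_poly_N (N : nat) (T : finType) (V : {set T}) (e : rel T)
  : {mpoly int[N]} :=
  \sum_(lam <- code V e) monomial_N N lam.

Definition Gn_vertices (n : nat) : {set 'I_n.+1} :=
  [set d : 'I_n.+1 | (1 < d)%N && (d %| n)%N].

Definition Gn_adj (n : nat) : rel 'I_n.+1 :=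
  fun a b => (a != b) && (1 < gcdn a b)%N.

Arguments Gn_vertices n : clear implicits.
Arguments Gn_adj n : clear implicits.

Definition F_Gn (N n : nat) : {mpoly int[N]} :=
  normal_poly_N N (Gn_vertices n) (Gn_adj n).

(* Main.v *)
Require Import Defs.
From HB Require Import structures.
From mathcomp Require Import all_boot all_order all_algebra.
From mathcomp Require Import mpoly.
From mathcomp Require Import zify.
From mathcomp Require Import fingroup perm.
Import GRing.Theory.

Lemma lexle_refl s : lexle s s.
Proof. by elim: s => //= a s ->; rewrite eqxx orbT. Qed.

Lemma lexle_trans s t u : lexle s t -> lexle t u -> lexle s u.
Proof.
elim: s t u => [|a s IH] [|b t] [|c u] //=.
case/orP=> [ab|/andP[/eqP-> st]]; case/orP=> [bc|/andP[/eqP<- tu]].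
- by rewrite (ltn_trans ab bc).
- by rewrite ab.
- by rewrite bc.
- by rewrite eqxx (IH _ _ st tu) orbT.
Qed.

Lemma lexle_total s t : lexle s t || lexle t s.
Proof.
elim: s t => [|a s IH] [|b t] //=.
case: (ltngtP a b) => //= ->; by rewrite eqxx /= IH.
Qed.

Lemma foldr_lexmin (cs : seq (seq nat)) x0 :
  let m := foldr (fun c m => if lexle c m then c else m) x0 cs in
  [/\ m \in x0 :: cs, lexle m x0 & forall d, d \in cs -> lexle m d].
Proof.
elim: cs => [|c cs IH] /=; first by rewrite mem_seq1 eqxx lexle_refl.
case: IH => IH1 IH2 IH3.
set m := foldr _ _ _ in IH1 IH2 IH3 *.
case: ifP => cm.
- split; first by rewrite !inE eqxx orbT.
  + exact: lexle_trans cm IH2.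
  + move=> d; rewrite inE => /orP[/eqP->|dcs]; first exact: lexle_refl.
    exact: lexle_trans cm (IH3 _ dcs).
- have mc : lexle m c by move: (lexle_total c m); rewrite cm.
  split => //.
  + move: IH1; rewrite !inE => /orP[->//|->]; by rewrite !orbT.
  + move=> d; rewrite inE => /orP[/eqP->//|]; exact: IH3.
Qed.

Lemma lexmin_mem cs : cs != [::] -> lexmin cs \in cs.
Proof.
rewrite /lexmin; case: (foldr_lexmin cs (head [::] cs)) => H1 _ _ csn.
move: H1; rewrite inE => /orP[/eqP->|//].
by case: cs csn => //= c cs _; rewrite inE eqxx.
Qed.

Lemma lexmin_le cs d : d \in cs -> lexle (lexmin cs) d.
Proof. by rewrite /lexmin; case: (foldr_lexmin cs (head [::] cs)) => _ _; apply. Qed.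

Lemma lexmin_const cs c : cs != [::] -> (forall d, d \in cs -> d = c) -> lexmin cs = c.
Proof. by move=> csn H; apply: H; apply: lexmin_mem. Qed.

Lemma lex_sorted_lt a (s1 s2 : seq nat) :
  sorted leq s1 -> sorted leq s2 -> size s1 = size s2 ->
  (forall x, (x < a)%N -> count_mem x s1 = count_mem x s2) ->
  (count_mem a s2 < count_mem a s1)%N -> ~~ lexle s2 s1.
Proof.
elim: s1 s2 => [|x s1 IH] [|y s2] //= so1 so2 [sz] Hc Ha.
have so1' := path_sorted so1; have so2' := path_sorted so2.
have m1 : all (leq x) s1 := order_path_min leq_trans so1.
have m2 : all (leq y) s2 := order_path_min leq_trans so2.
have [xa|] := ltnP x a.
-
  have Hx := Hc x xa; rewrite /= eqxx /= in Hx.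
  have exy : x = y.
    case: (ltngtP x y) => // [xy|yx].
    + have : count_mem x (y :: s2) = 0%N.
        apply/count_memPn; rewrite inE negb_or; rewrite neq_ltn xy /=.
        apply/negP=> xs2; move/allP: m2 => /(_ _ xs2); by rewrite leqNgt xy.
      by rewrite /= -Hx.
    + have ya : (y < a)%N by apply: ltn_trans yx xa.
      have Hy := Hc y ya; rewrite /= eqxx /= in Hy.
      have : count_mem y (x :: s1) = 0%N.
        apply/count_memPn; rewrite inE negb_or; rewrite neq_ltn yx /=.
        apply/negP=> ys1; move/allP: m1 => /(_ _ ys1); by rewrite leqNgt yx.
      move=> /= H0; by rewrite H0 in Hy.
  subst y; rewrite ltnn eqxx /=.
  apply: IH => //.
  + move=> z za; have := Hc z za; rewrite /=; case: (x == z) => /=; lia.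
  + move: Ha; rewrite /= (_ : (x == a) = false) //; apply/negbTE; rewrite neq_ltn xa.
    done.
-
  move=> ax.
  have ain1 : a \in x :: s1 by rewrite -has_pred1 has_count; apply: leq_ltn_trans Ha.
  have xa : x = a.
    move: ain1; rewrite inE => /orP[/eqP->//|as1].
    move/allP: m1 => /(_ _ as1) xa'; apply/eqP; rewrite eqn_leq xa' ax //.
  subst x.
  have ay : (a <= y)%N.
    rewrite leqNgt; apply/negP => ya.
    have := Hc y ya; rewrite /= eqxx /= => Hy.
    have : count_mem y (a :: s1) = 0%N.
      apply/count_memPn; rewrite inE negb_or neq_ltn ya /=.
      apply/negP=> ys1; move/allP: m1 => /(_ _ ys1); by rewrite leqNgt ya.
    move=> /= H0; by rewrite H0 in Hy.
  case: (ltngtP y a) => //; first by rewrite ltnNge ay.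
  + move=> ey; subst y; rewrite /=.
    apply: IH => //.
    * move=> z za; have := Hc z za; rewrite /=.
      have -> : (a == z) = false by apply/negbTE; rewrite neq_ltn za orbT.
      done.
    * move: Ha; rewrite /= eqxx /=; lia.
Qed.
Lemma count_range R m' : (R < m')%N ->
  count (fun e => (0 < e) && (e <= R))%N (iota 0 m') = R.
Proof.
move=> Rm; rewrite -(subnKC Rm) iotaD count_cat /= add0n.
rewrite (@eq_in_count _ _ predT); last by move=> x; rewrite mem_iota => /andP[x1 xR]; rewrite /= x1 /=; lia.
rewrite count_predT size_iota.
rewrite (@eq_in_count _ _ pred0) ?count_pred0 ?addn0 //.
by move=> x; rewrite mem_iota => /andP[x1 _] /=; lia.
Qed.

Lemma card_range R m' : (R < m')%N ->
  #|[pred e : 'I_m' | (0 < e) && (e <= R)]| = R.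
Proof.
move=> Rm; rewrite -sum1_card.
rewrite (eq_bigl (fun e : 'I_m' => (0 < e) && (e <= R))%N) //.
rewrite -(big_mkord (fun e => (0 < e) && (e <= R))%N (fun _ => 1%N)).
rewrite sum1_count /index_iota subn0.
exact: count_range.
Qed.

Lemma card_zero m' : #|[pred e : 'I_m'.+1 | nat_of_ord e == 0%N]| = 1%N.
Proof.
rewrite -(card1 (@ord0 m')); apply: eq_card => e; rewrite !inE.
by apply/eqP/eqP => [->//|h0]; rewrite h0.
Qed.

Lemma nth_prime_spec j : prime (nth_prime j) /\ (nth_prime j < nth_prime j.+1)%N.
Proof.
elim: j => [|j [pj _]] /=; rewrite /next_prime.
- case: ex_minnP => q /andP[q2 pq] _; by split.
- case: ex_minnP => q /andP[q2 pq] _; split => //.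
  by case: ex_minnP => q' /andP[q2' pq'] _.
Qed.

Lemma nth_prime_prime j : prime (nth_prime j).
Proof. by case: (nth_prime_spec j). Qed.

Lemma nth_prime_lt i j : (i < j)%N -> (nth_prime i < nth_prime j)%N.
Proof.
move=> ij; apply: (@homo_ltn _ nth_prime (fun a b => a < b)%N) => //.
  by move=> y x z; apply: ltn_trans.
by move=> x; case: (nth_prime_spec x).
Qed.

Lemma nth_prime_ltE i j : (nth_prime i < nth_prime j)%N = (i < j)%N.
Proof.
apply/idP/idP; last exact: nth_prime_lt.
case: (ltngtP i j) => // [ji|->]; last by rewrite ltnn.
move=> h; have := ltn_trans h (nth_prime_lt _ _ ji); by rewrite ltnn.
Qed.

Lemma nth_prime_inj : injective nth_prime.
Proof.
move=> i j E; case: (ltngtP i j) => // h; have := nth_prime_lt _ _ h; by rewrite E ltnn.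
Qed.

Section Arith.
Variables (n k : nat) (p r : nat -> nat).
Hypothesis pP : forall i, (i < k)%N -> prime (p i).
Hypothesis pinj : forall i j, (i < k)%N -> (j < k)%N -> p i = p j -> i = j.
Hypothesis rpos : forall i, (i < k)%N -> (1 <= r i)%N.
Hypothesis nE : n = (\prod_(i < k) p i ^ r i)%N.

Lemma pPo (i : 'I_k) : prime (p i). Proof. exact: pP. Qed.

Lemma pinjo (i j : 'I_k) : p i = p j -> i = j.
Proof. by move=> h; apply: val_inj; exact: (pinj _ _ (ltn_ord i) (ltn_ord j) h). Qed.

Lemma prodX_gt0 (e : 'I_k -> nat) : (0 < \prod_(i < k) p i ^ e i)%N.
Proof. by apply: prodn_gt0 => i; rewrite expn_gt0 prime_gt0 ?pPo. Qed.

Lemma logn_prodX (e : 'I_k -> nat) q :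
  logn q (\prod_(i < k) p i ^ e i) = (\sum_(i < k) e i * (q == p i))%N.
Proof.
pose K (x y : nat) := x = logn q y /\ (0 < y)%N.
suff [] : K (\sum_(i < k) e i * (q == p i))%N (\prod_(i < k) p i ^ e i)%N by [].
apply: (big_rec2 K); first by split; rewrite ?logn1.
move=> i x y _ [-> y0]; split; last by rewrite muln_gt0 y0 expn_gt0 prime_gt0 ?pPo.
have pi0 : 0 < p i ^ e i by rewrite expn_gt0 prime_gt0 ?pPo.
rewrite lognM // lognX (logn_prime _ (pPo i)) //.
Qed.

Lemma logn_prodX_p (e : 'I_k -> nat) (j : 'I_k) :
  logn (p j) (\prod_(i < k) p i ^ e i) = e j.
Proof.
rewrite logn_prodX (bigD1 j) //= eqxx muln1 big1 ?addn0 // => i ij.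
case: eqP => [/pinjo E|]; last by rewrite muln0.
by rewrite E eqxx in ij.
Qed.

Lemma logn_prodX_np (e : 'I_k -> nat) q :
  (forall j : 'I_k, q != p j) -> logn q (\prod_(i < k) p i ^ e i) = 0%N.
Proof.
move=> H; rewrite logn_prodX big1 // => i _.
by rewrite (negbTE (H i)) muln0.
Qed.

Lemma pdvd_prod (e : 'I_k -> nat) (j : 'I_k) :
  (p j %| \prod_(i < k) p i ^ e i)%N = (0 < e j)%N.
Proof. by rewrite -(logn_prodX_p e j) logn_gt0 mem_primes pPo prodX_gt0. Qed.

Lemma n_gt0 : (0 < n)%N.
Proof. by rewrite nE prodX_gt0. Qed.

Lemma prime_dvd_n q : prime q -> (q %| n)%N -> exists j : 'I_k, q = p j.
Proof.
move=> pq qn.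
have : (0 < logn q n)%N by rewrite logn_gt0 mem_primes pq n_gt0 qn.
case: (boolP [exists j : 'I_k, q == p j]) => [/existsP[j /eqP->]|]; first by exists j.
rewrite negb_exists => /forallP H.
by rewrite nE logn_prodX_np.
Qed.

Lemma dvd_n_factor v : (v %| n)%N ->
  v = (\prod_(i < k) p i ^ logn (p i) v)%N.
Proof.
move=> vn; have v0 : (0 < v)%N by apply: dvdn_gt0 n_gt0 vn.
apply: eqn_from_log => //; first exact: prodX_gt0.
move=> q.
case: (boolP [exists j : 'I_k, q == p j]) => [/existsP[j /eqP->]|].
  by rewrite (logn_prodX_p (fun i : 'I_k => logn (p i) v)).
rewrite negb_exists => /forallP H.
rewrite logn_prodX_np //.
case: (posnP (logn q v)) => // lp.
have : q \in primes v by rewrite -logn_gt0.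
rewrite mem_primes => /and3P[pq _ qv].
have [j qj] := prime_dvd_n _ pq (dvdn_trans qv vn).
by move: (H j); rewrite qj eqxx.
Qed.

Lemma logn_n (j : 'I_k) : logn (p j) n = r j.
Proof. by rewrite nE (logn_prodX_p (fun i : 'I_k => r i)). Qed.

Lemma prodX_dvd_n (e : 'I_k -> nat) : (forall i : 'I_k, e i <= r i)%N ->
  (\prod_(i < k) p i ^ e i %| n)%N.
Proof.
move=> H; rewrite nE; apply: (big_rec2 (fun x y => x %| y)%N) => // i x y _ xy.
by apply: dvdn_mul => //; apply: dvdn_exp2l.
Qed.

Lemma p_dvd_n (j : 'I_k) : (p j %| n)%N.
Proof.
rewrite nE (bigD1 j) //=; apply: dvdn_mulr.
by apply: dvdn_exp; rewrite ?rpos.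
Qed.

Lemma p_le_n (j : 'I_k) : (p j <= n)%N.
Proof. exact: dvdn_leq n_gt0 (p_dvd_n j). Qed.

Lemma r_lt_n (j : 'I_k) : (r j < n)%N.
Proof.
apply: (@leq_trans (p j ^ r j)); first by apply: ltn_expl; rewrite prime_gt1 ?pPo.
apply: dvdn_leq n_gt0 _; by rewrite nE (bigD1 j) //= dvdn_mulr.
Qed.

Lemma has_p_factor v : (1 < v)%N -> (v %| n)%N -> exists j : 'I_k, (p j %| v)%N.
Proof.
move=> v1 vn; have pv := pdiv_prime v1.
have [j E] := prime_dvd_n _ pv (dvdn_trans (pdiv_dvd v) vn).
by exists j; rewrite -E pdiv_dvd.
Qed.


Hypothesis rmono : forall i j, (i <= j)%N -> (j < k)%N -> (r j <= r i)%N.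

Definition V := Gn_vertices n.
Definition E := Gn_adj n.
Definition Pv (i : 'I_k) : 'I_n.+1 := inord (p i).
Definition C (i : 'I_k) : {set 'I_n.+1} := [set v in V | p i %| v].
Definition S0 : {set {set 'I_n.+1}} := [set C i | i : 'I_k].
Definition supp (v : 'I_n.+1) : {set 'I_k} := [set i : 'I_k | p i %| v].

Lemma inV (v : 'I_n.+1) : (v \in V) = (1 < v) && (v %| n).
Proof. by rewrite inE. Qed.

Lemma PvE i : nat_of_ord (Pv i) = p i.
Proof. by rewrite /Pv inordK // ltnS p_le_n. Qed.

Lemma Pv_inV i : Pv i \in V.
Proof. by rewrite inV PvE prime_gt1 ?pPo // p_dvd_n. Qed.

Lemma Pv_inj : injective Pv.
Proof. by move=> i j /(congr1 (@nat_of_ord _)); rewrite !PvE; apply: pinjo. Qed.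

Lemma edgeE x y : is_edge V E x y = [&& x \in V, y \in V, x != y & 1 < gcdn x y].
Proof. by rewrite /is_edge /E /Gn_adj; case: (x != y). Qed.

Lemma gcd_p_gt1 (i : 'I_k) x : (1 < gcdn (p i) x) = (p i %| x).
Proof.
apply/idP/idP => [h|h].
  apply/negPn; rewrite -prime_coprime ?pPo //; apply/negP => /eqP c.
  by rewrite c in h.
by rewrite (gcdn_idPl h) prime_gt1 ?pPo.
Qed.

Lemma gcd_pp (i j : 'I_k) : i != j -> gcdn (p i) (p j) = 1.
Proof.
move=> ij; apply/eqP; rewrite -/(coprime _ _) prime_coprime ?pPo //.
rewrite dvdn_prime2 ?pPo //; apply/negP => /eqP /pinjo E'.
by rewrite E' eqxx in ij.
Qed.

Lemma C_clique i : is_clique V E (C i).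
Proof.
apply/andP; split.
  by apply/subsetP => v; rewrite inE => /andP[].
apply/forallP => x; apply/implyP => xC; apply/forallP => y; apply/implyP => yC.
apply/implyP => xy; rewrite /E /Gn_adj xy /=.
move: xC yC; rewrite !inE => /andP[xV px] /andP[_ py].
apply: (@leq_trans (p i)); first by rewrite prime_gt1 ?pPo.
apply: dvdn_leq; last by rewrite dvdn_gcd px py.
by rewrite gcdn_gt0; move: xV => /andP[/ltnW -> _].
Qed.

Lemma Pv_in_C i j : (Pv i \in C j) = (i == j).
Proof.
rewrite inE Pv_inV PvE /= dvdn_prime2 ?pPo //.
apply/eqP/eqP => [/pinjo -> //|-> //].
Qed.

Lemma C_inj : injective C.
Proof. by move=> i j Cij; apply/eqP; rewrite -Pv_in_C -Cij Pv_in_C. Qed.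

Lemma S0_card : #|S0| = k.
Proof. by rewrite card_imset ?card_ord //; apply: C_inj. Qed.

Lemma S0_tcc : total_clique_covering V E S0.
Proof.
apply/and3P; split.
- apply/forallP => X; apply/implyP => /imsetP[i _ ->]; exact: C_clique.
- apply/forallP => v; apply/implyP => vV.
  move: (vV); rewrite inV => /andP[v1 vn].
  have [j pj] := has_p_factor _ v1 vn.
  apply/existsP; exists (C j); rewrite imset_f // inE vV pj.
  done.
- apply/forallP => x; apply/forallP => y; apply/implyP; rewrite edgeE.
  case/and4P => xV yV _ g1.
  move: (xV); rewrite inV => /andP[_ xn].
  have [j pj] := has_p_factor _ g1 (dvdn_trans (dvdn_gcdl _ _) xn).
  move: (xV) (yV); rewrite !inV => xV' yV'.
  apply/existsP; exists (C j); rewrite imset_f // !inE xV' yV'.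
  by rewrite (dvdn_trans pj (dvdn_gcdl _ _)) (dvdn_trans pj (dvdn_gcdr _ _)).
Qed.

Lemma clique_sub X i : is_clique V E X -> Pv i \in X -> X \subset C i.
Proof.
case/andP => /subsetP XV /forallP cl PX.
apply/subsetP => x xX; rewrite inE (XV _ xX) /=.
case: (eqVneq x (Pv i)) => [->|xP]; first by rewrite PvE.
move: (cl (Pv i)); rewrite PX /= => /forallP/(_ x); rewrite xX /= eq_sym xP /=.
by rewrite /E /Gn_adj => /andP[_]; rewrite PvE gcd_p_gt1.
Qed.

Definition fS (S : {set {set 'I_n.+1}}) (i : 'I_k) : {set 'I_n.+1} :=
  odflt set0 [pick X in S | Pv i \in X].

Lemma fS_spec S i : total_clique_covering V E S -> fS S i \in S /\ Pv i \in fS S i.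
Proof.
case/and3P => _ /forallP/(_ (Pv i)) cov _.
move: cov; rewrite Pv_inV /= => /existsP[X /andP[XS PX]].
rewrite /fS; case: pickP => [Y /andP[]//|/(_ X)]; by rewrite XS PX.
Qed.

Lemma fS_sub S i : total_clique_covering V E S -> fS S i \subset C i.
Proof.
move=> tcc; have [XS PX] := fS_spec _ i tcc.
apply: clique_sub => //.
by case/and3P: tcc => /forallP/(_ (fS S i)); rewrite XS.
Qed.

Lemma fS_inj S : total_clique_covering V E S -> injective (fS S).
Proof.
move=> tcc i j fij; have [_ Pj] := fS_spec _ j tcc.
have := subsetP (fS_sub _ i tcc) _; rewrite fij => /(_ _ Pj).
by rewrite Pv_in_C => /eqP.
Qed.

Lemma tcc_lb S : total_clique_covering V E S -> (k <= #|S|)%N.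
Proof.
move=> tcc; rewrite -{1}(card_ord k) -(card_imset _ (fS_inj _ tcc)).
apply: subset_leq_card; apply/subsetP => X /imsetP[i _ ->].
by case: (fS_spec _ i tcc).
Qed.

Lemma S0_min : min_tcc V E S0.
Proof.
apply/andP; split; first exact: S0_tcc.
apply/forallP => S'; apply/implyP => tcc; rewrite S0_card; exact: tcc_lb.
Qed.

Lemma min_unique S : min_tcc V E S -> S = S0.
Proof.
case/andP => tcc /forallP/(_ S0); rewrite S0_tcc /= S0_card => Sk.
have eqS : S = [set fS S i | i : 'I_k].
  apply/setP => X; symmetry; move: X; apply/subset_cardP.
    rewrite card_imset ?card_ord; last exact: fS_inj.
    by apply/eqP; rewrite eqn_leq Sk tcc_lb.
  apply/subsetP => X /imsetP[i _ ->]; by case: (fS_spec _ i tcc).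
rewrite eqS /S0; apply: eq_imset => i.
apply/eqP; rewrite eqEsubset fS_sub //=.
apply/subsetP => x xC.
have [_ Pi] := fS_spec _ i tcc.
case: (eqVneq x (Pv i)) => [->//|xP].
case/and3P: (tcc) => _ _ /forallP/(_ (Pv i))/forallP/(_ x).
move: (xC); rewrite inE => /andP[xV px].
rewrite edgeE Pv_inV xV eq_sym xP PvE gcd_p_gt1 px /=.
case/existsP => X /and3P[]; rewrite {1}eqS => /imsetP[j _ ->] Pj xj.
have := subsetP (fS_sub _ j tcc) _ Pj; rewrite Pv_in_C => /eqP ij.
by rewrite ij.
Qed.

Hypothesis k1 : (0 < k)%N.
Hypothesis npn : ~~ prime n.

Definition i0 : 'I_k := Ordinal k1.

Lemma n_gt1 : (1 < n)%N.
Proof. apply: leq_trans (p_le_n i0); by rewrite prime_gt1 ?pPo. Qed.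

Definition nn : 'I_n.+1 := ord_max.

Lemma nn_inV : nn \in V.
Proof. by rewrite inV /= n_gt1 dvdnn. Qed.

Lemma noniso v : ~~ isolated V E v.
Proof.
rewrite /isolated negb_and; case: (boolP (v \in V)) => //= vV.
rewrite negb_forall; apply/existsP.
case: (eqVneq v nn) => [->|vn].
  exists (Pv i0); rewrite negbK edgeE nn_inV Pv_inV /=.
  apply/andP; split.
    apply/eqP => /(congr1 (@nat_of_ord _)); rewrite PvE /= => E'.
    by move: npn; rewrite E' pP.
  by rewrite gcdnC PvE gcd_p_gt1; exact: p_dvd_n.
exists nn; rewrite negbK edgeE nn_inV vV vn /=.
by move: vV; rewrite inV => /andP[v1 vd]; rewrite (gcdn_idPl vd).
Qed.

Lemma nonisoS S : nonisolated_cliques V E S = S.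
Proof.
rewrite /nonisolated_cliques.
have -> : [set v | isolated V E v] = set0.
  by apply/setP => v; rewrite !inE (negbTE (noniso v)).
by rewrite imset0 setD0.
Qed.

Definition L := enum (nonisolated_cliques V E S0).
Definition m := size L.

Lemma memL X : (X \in L) = (X \in S0).
Proof. by rewrite /L mem_enum nonisoS. Qed.

Lemma Emk : m = k.
Proof. by rewrite /m /L -cardE nonisoS S0_card. Qed.

Lemma CinL i : C i \in L.
Proof. by rewrite memL imset_f. Qed.

Definition h (i : 'I_k) : 'I_m := Ordinal (etrans (index_mem (C i) L) (CinL i)).

Lemma nth_h i : nth set0 L (h i) = C i.
Proof. by rewrite /= nth_index // CinL. Qed.

Lemma h_inj : injective h.
Proof. by move=> i j /(congr1 (fun x : 'I_m => nth set0 L x)); rewrite !nth_h => /C_inj. Qed.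

Lemma h_bij : bijective h.
Proof. by apply: (inj_card_bij h_inj); rewrite !card_ord Emk. Qed.

Definition tau_of (s : 'S_m) (i : 'I_k) : 'I_k := cast_ord Emk (s (h i)).

Lemma tau_of_inj s : injective (tau_of s).
Proof. by move=> i j /cast_ord_inj /perm_inj /h_inj. Qed.

Definition Lab (tau : 'I_k -> 'I_k) (v : 'I_n.+1) : nat :=
  (\prod_(i in supp v) nth_prime (tau i))%N.

Lemma label_Lab s v : v \in V -> label (S := S0) s v = Lab (tau_of s) v.
Proof.
move=> vV; rewrite /label (negbTE (noniso v)) /Lab.
rewrite (reindex h); last exact: onW_bij h_bij.
apply: eq_big => [i|i _]; last by [].
by rewrite nth_h !inE; move: vV; rewrite inV => ->.
Qed.

Lemma tau_exists (tau : 'I_k -> 'I_k) : injective tau ->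
  exists s : 'S_m, forall i, tau_of s i = tau i.
Proof.
move=> taui; have [g hg gh] := h_bij.
have gi : injective (fun j => cast_ord (esym Emk) (tau (g j))).
  by move=> x y /cast_ord_inj /taui /(can_inj gh).
exists (perm gi) => i; rewrite /tau_of permE hg.
by apply: val_inj.
Qed.

Definition codeT (tau : 'I_k -> 'I_k) : seq nat :=
  sort leq [seq Lab tau v | v <- enum V].

Lemma code_of_T s : code_of (V := V) (e := E) (S := S0) s = codeT (tau_of s).
Proof.
rewrite /code_of /codeT; congr (sort _ _); apply/eq_in_map => v.
by rewrite mem_enum => vV; rewrite label_Lab.
Qed.

Lemma in_all_codes s : code_of (V := V) (e := E) (S := S0) s \in all_codes V E.
Proof.
apply/flatten_mapP; exists S0; first by rewrite mem_enum inE S0_min.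
by apply: map_f; rewrite mem_enum inE.
Qed.

Lemma all_codes_inv c : c \in all_codes V E -> exists s : 'S_m, c = code_of (V := V) (e := E) (S := S0) s.
Proof.
case/flatten_mapP => Cov; rewrite mem_enum inE => /min_unique EC.
subst Cov; case/mapP => s _ ->; by exists s.
Qed.

Lemma code_char : exists tau, [/\ injective tau, code V E = codeT tau &
  forall tau', injective tau' -> lexle (codeT tau) (codeT tau')].
Proof.
have ne : all_codes V E != [::].
  by apply/negP => /eqP E0; have := in_all_codes 1; rewrite E0.
have [s cs] := all_codes_inv _ (lexmin_mem _ ne).
exists (tau_of s); split; first exact: tau_of_inj.
  by rewrite /code cs code_of_T.
move=> tau' ti'; have [s' Hs'] := tau_exists _ ti'.
have -> : codeT tau' = codeT (tau_of s').
  by rewrite /codeT; congr (sort _ _); apply/eq_in_map => v _; rewrite /Lab; apply: eq_bigr => i _; rewrite Hs'.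
rewrite -!code_of_T -cs; apply: lexmin_le; exact: in_all_codes.
Qed.

Section Count.
Variable A : {set 'I_k}.
Hypothesis A0 : A != set0.

Definition Fm (i : 'I_k) : pred 'I_n.+1 :=
  [pred e : 'I_n.+1 | if i \in A then (0 < e) && (e <= r i) else nat_of_ord e == 0%N].

Definition gE (f : {ffun 'I_k -> 'I_n.+1}) : 'I_n.+1 :=
  inord (\prod_(i < k) p i ^ f i).

Lemma Fm_le f : f \in family Fm -> forall i, (f i <= r i)%N.
Proof.
move/familyP => H i; move: (H i); rewrite inE.
by case: (i \in A) => [/andP[]//|/eqP->].
Qed.

Lemma gE_val f : f \in family Fm -> nat_of_ord (gE f) = (\prod_(i < k) p i ^ f i)%N.
Proof.
move=> fF; rewrite /gE inordK // ltnS; apply: (@dvdn_leq _ n); first exact: n_gt0.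
by apply: prodX_dvd_n => i; apply: Fm_le.
Qed.

Lemma gE_inj : {in family Fm &, injective gE}.
Proof.
move=> f1 f2 F1 F2 /(congr1 (@nat_of_ord _)); rewrite !gE_val // => E12.
apply/ffunP => i; apply: ord_inj.
by rewrite -(logn_prodX_p (fun i => nat_of_ord (f1 i))) E12 logn_prodX_p.
Qed.

Lemma card_Fm : #|family Fm| = (\prod_(i in A) r i)%N.
Proof.
have fm : forall (T : Type) (g : T -> nat) s,
    foldr muln 1%N [seq g x | x <- s] = (\prod_(x <- s) g x)%N.
  by move=> T g; elim=> [|x s IH]; rewrite ?big_nil ?big_cons //= IH.
rewrite card_family /image_mem fm big_enum /= [RHS]big_mkcond /=.
apply: eq_bigr => i _; rewrite /Fm.
case: (i \in A).
  by rewrite card_range // ltnS ltnW // r_lt_n.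
exact: card_zero.
Qed.


Lemma img : [set v in V | supp v == A] = [set gE f | f in family Fm].
Proof.
apply/setP => v; rewrite inE; apply/andP/imsetP.
- case=> vV /eqP sA; move: (vV); rewrite inV => /andP[v1 vn].
  have v0 : (0 < v)%N by apply: ltnW.
  pose f := [ffun i : 'I_k => (inord (logn (p i) v) : 'I_n.+1)].
  have fE i : nat_of_ord (f i) = logn (p i) v.
    rewrite ffunE inordK // ltnS; apply: leq_trans (ltnW (r_lt_n i)).
    by rewrite -logn_n; apply: dvdn_leq_log n_gt0 vn.
  have fF : f \in family Fm.
    apply/familyP => i; rewrite inE fE.
    have -> : (i \in A) = (p i %| v)%N by rewrite -sA inE.
    case: ifP => pv.
      rewrite logn_gt0 mem_primes pPo v0 pv /=.
      by rewrite -logn_n; apply: dvdn_leq_log n_gt0 vn.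
    apply/eqP; apply/eqP; rewrite eqn0Ngt logn_gt0 mem_primes pv; by rewrite !andbF.
  exists f => //; apply: ord_inj; rewrite gE_val //.
  rewrite {1}(dvd_n_factor _ vn); apply: eq_bigr => i _; by rewrite fE.
- case=> f fF ->; move/familyP: (fF) => Hf.
  have pd (j : 'I_k) : (p j %| gE f)%N = (j \in A).
    rewrite gE_val // pdvd_prod; move: (Hf j); rewrite inE.
    by case: (j \in A) => [/andP[]//|/eqP->].
  split.
    rewrite inV gE_val // prodX_dvd_n ?andbT; last by move=> i; apply: Fm_le.
    have [i iA] := set0Pn _ A0.
    apply: leq_trans (prime_gt1 (pPo i)) _; apply: dvdn_leq; first exact: prodX_gt0.
    by rewrite -gE_val // pd.
  by apply/eqP/setP => j; rewrite inE pd.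
Qed.

Lemma cnt_supp : #|[set v in V | supp v == A]| = (\prod_(i in A) r i)%N.
Proof. by rewrite img card_in_imset ?card_Fm //; apply: gE_inj. Qed.

End Count.

Lemma supp_n0 v : v \in V -> supp v != set0.
Proof.
rewrite inV => /andP[v1 vn]; have [j pj] := has_p_factor _ v1 vn.
by apply/set0Pn; exists j; rewrite inE.
Qed.

Lemma sum_supp (M : nmodType) (F : {set 'I_k} -> M) :
  (\sum_(v in V) F (supp v) = \sum_(A : {set 'I_k} | A != set0) F A *+ \prod_(i in A) r i)%R.
Proof.
rewrite (partition_big supp (fun A => A != set0)) /=; last exact: supp_n0.
apply: eq_bigr => A A0.
rewrite -(cnt_supp _ A0) -sumr_const.
apply: eq_big => [v|v]; first by rewrite !inE.
by rewrite inE => /andP[_ /eqP->].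
Qed.

Lemma sum_supp_nat (F : {set 'I_k} -> nat) :
  \sum_(v in V) F (supp v) = \sum_(A : {set 'I_k} | A != set0) F A * \prod_(i in A) r i.
Proof.
rewrite (partition_big supp (fun A => A != set0)) /=; last exact: supp_n0.
apply: eq_bigr => A A0.
rewrite -(cnt_supp _ A0) mulnC -sum_nat_const.
apply: eq_big => [v|v]; first by rewrite !inE.
by rewrite inE => /andP[_ /eqP->].
Qed.

Definition LabS (t : 'I_k -> 'I_k) (A : {set 'I_k}) : nat :=
  \prod_(i in A) nth_prime (t i).

Lemma count_codeT (t : 'I_k -> 'I_k) x : count_mem x (codeT t) =
  \sum_(A : {set 'I_k} | A != set0) (LabS t A == x) * \prod_(i in A) r i.
Proof.
rewrite /codeT count_sort count_map -sum1_count big_enum_cond /=.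
rewrite -sum_supp_nat big_mkcond [RHS]big_mkcond /=; apply: eq_bigr => v _.
by rewrite /Lab /LabS; case: (v \in V); case: (_ == x).
Qed.

Lemma LabS_dvd (t : 'I_k -> 'I_k) (A : {set 'I_k}) i : i \in A -> (nth_prime (t i) %| LabS t A).
Proof. by move=> iA; rewrite /LabS (bigD1 i) //= dvdn_mulr. Qed.

Lemma LabS_gt0 (t : 'I_k -> 'I_k) (A : {set 'I_k}) : 0 < LabS t A.
Proof. by apply: prodn_gt0 => i; rewrite prime_gt0 ?nth_prime_prime. Qed.

Lemma count_single (t : 'I_k -> 'I_k) (a : 'I_k) : injective t ->
  count_mem (nth_prime (t a)) (codeT t) = r a.
Proof.
move=> ti; rewrite count_codeT (bigD1 [set a]) /=; last first.
  by apply/set0Pn; exists a; rewrite inE.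
rewrite /LabS big_set1 eqxx mul1n big_set1 big1 ?addn0 // => A /andP[A0 Aa].
case: eqP => [E'|]; last by rewrite mul0n.
have sub : A \subset [set a].
  apply/subsetP => i iA; rewrite inE; have := LabS_dvd t _ _ iA.
  rewrite /LabS E' dvdn_prime2 ?nth_prime_prime // => /eqP /nth_prime_inj.
  by move/ord_inj/ti => ->.
case/set0Pn: A0 => b bA.
move: Aa; rewrite eqEsubset sub /= => /negP; case; apply/subsetP => x.
rewrite inE => /eqP ->; by have := subsetP sub b bA; rewrite inE => /eqP <-.
Qed.

Lemma core (tau : 'I_k -> 'I_k) : injective tau ->
  (forall t', injective t' -> lexle (codeT tau) (codeT t')) -> forall i, r (tau i) = r i.
Proof.
move=> ti Hmin.
case: (boolP [forall i, r (tau i) == r i]) => [/forallP H i|]; first by apply/eqP.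
rewrite negb_forall => /existsP[a1 bad1].
case: (@arg_minnP _ a1 (fun a => r (tau a) != r a) (fun a => nat_of_ord (tau a)) bad1) => a0 bad0 amin.
set j0 := tau a0.
have minH b : (tau b < j0)%N -> r (tau b) = r b.
  move=> bj; apply/eqP; apply/negPn/negP => bb.
  by have := amin b bb; rewrite leqNgt bj.
have lt0 : (r a0 < r j0)%N.
  pose B := [set b : 'I_k | r j0 < r b].
  have sub : tau @^-1: B \subset B.
    apply/subsetP => c; rewrite !inE => h.
    have cj : (tau c < j0)%N.
      rewrite ltnNge; apply/negP => jc; have := rmono _ _ jc (ltn_ord (tau c)).
      by rewrite leqNgt h.
    by rewrite -(minH c cj).
  have eqB : tau @^-1: B = B by apply/eqP; rewrite eqEcard sub card_preimset // leqnn.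
  rewrite ltn_neqAle eq_sym bad0 /= leqNgt; apply/negP => h.
  have : a0 \in tau @^-1: B by rewrite eqB inE.
  by rewrite !inE -/j0 ltnn.
suff : ~~ lexle (codeT tau) (codeT id) by rewrite (Hmin id (@inj_id _)).
apply: (@lex_sorted_lt (nth_prime j0)).
- by rewrite /codeT; apply: sort_sorted; exact: leq_total.
- by rewrite /codeT; apply: sort_sorted; exact: leq_total.
- by rewrite /codeT !size_sort !size_map.
- move=> x xj; rewrite !count_codeT.
  rewrite (reindex_inj (imset_inj ti)) /=.
  apply: eq_big => [A|A A0]; first by rewrite imset_eq0.
  rewrite /LabS !big_imset /=; try by move=> u v _ _; apply: ti.
  case: eqP => // Ex; congr (_ * _); apply: eq_bigr => i iA.
  apply: minH; rewrite -nth_prime_ltE; apply: leq_ltn_trans xj.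
  apply: dvdn_leq; first by rewrite -Ex LabS_gt0.
  by rewrite -Ex; apply: LabS_dvd.
- by rewrite (count_single id j0 (@inj_id _)) count_single.
Qed.

Local Open Scope ring_scope.

Lemma monomial_LabS N (kN : (k <= N)%N) (t : 'I_k -> 'I_k) (A : {set 'I_k}) :
  injective t ->
  monomial_N N (LabS t A) = \prod_(i in A) 'X_(widen_ord kN (t i)).
Proof.
move=> ti; rewrite /monomial_N.
have pe : perm_eq (primes (LabS t A)) [seq nth_prime (t i) | i <- enum A].
  apply: uniq_perm; first exact: primes_uniq.
    rewrite map_inj_uniq ?enum_uniq //.
    by move=> x y /nth_prime_inj /ord_inj /ti.
  move=> x; rewrite mem_primes LabS_gt0 /=; apply/andP/mapP.
    case=> px; rewrite /LabS Euclid_dvd_prod // big_has_cond => /hasP[i _].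
    case/andP => iA; rewrite dvdn_prime2 ?nth_prime_prime // => /eqP ->.
    by exists i; rewrite ?mem_enum.
  case=> i; rewrite mem_enum => iA ->; split; first exact: nth_prime_prime.
  exact: LabS_dvd.
rewrite (perm_big _ pe) big_map big_enum /=; apply: eq_bigr => i _.
rewrite (big_pred1 (widen_ord kN (t i))) // => j /=.
apply/eqP/eqP => [/nth_prime_inj E'|->//]; by apply: ord_inj.
Qed.

Lemma F_nonprime N (kN : (k <= N)%N) :
  F_Gn N n =
  \sum_(I : {set 'I_N} | (I != set0) && [forall i in I, (i < k)%N])
     \prod_(i in I) ((r i)%:R * 'X_i).
Proof.
have [tau [ti cE Hmin]] := code_char.
have rt := core _ ti Hmin.
set W := widen_ord kN.
pose FA (A : {set 'I_k}) : {mpoly int[N]} := \prod_(i in A) 'X_(W (tau i)).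
have -> : F_Gn N n = \sum_(A : {set 'I_k} | A != set0) FA A *+ \prod_(i in A) r i.
  rewrite -sum_supp /F_Gn /normal_poly_N.
  have -> : code (Gn_vertices n) (Gn_adj n) = codeT tau := cE.
  rewrite /codeT (perm_big _ (permEl (perm_sort _ _))) big_map big_enum /=.
  by apply: eq_bigr => v _; rewrite /Lab -/(LabS tau (supp v)) monomial_LabS.
have [g tg gt] := injF_bij ti.
pose h (A : {set 'I_k}) : {set 'I_N} := [set W (tau i) | i in A].
pose hinv (I : {set 'I_N}) : {set 'I_k} := [set i : 'I_k | W (tau i) \in I].
have Winj : injective (fun i => W (tau i)).
  by move=> x y /(congr1 (@nat_of_ord _)) /= /ord_inj /ti.
symmetry; rewrite (reindex_onto h hinv) /=; last first.
  move=> I /andP[_ /forallP HI]; apply/setP => j; apply/imsetP/idP.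
    by case=> i; rewrite inE => Ii ->.
  move=> jI; have jk : (j < k)%N by have := HI j; rewrite jI.
  exists (g (Ordinal jk)); first by rewrite inE gt (_ : W (Ordinal jk) = j) //; apply: ord_inj.
  by rewrite gt; apply: ord_inj.
apply: eq_big => [A|A /andP[_ _]].
  have -> : hinv (h A) = A.
    apply/setP => i; rewrite inE; apply/imsetP/idP => [[x xA /Winj ->]//|iA]; by exists i.
  rewrite eqxx andbT imset_eq0; case: (A == set0) => //=.
  by apply/forallP => x; apply/implyP => /imsetP[i _ ->] /=.
rewrite big_imset /=; last by move=> x y _ _; apply: Winj.
rewrite big_split /= -natr_prod mulr_natl; congr (_ *+ _).
by apply: eq_bigr => i _; rewrite rt.
Qed.

End Arith.

Section PrimeCase.
Variable n : nat.
Hypothesis pn : prime n.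

Definition V1 := Gn_vertices n.
Definition E1 := Gn_adj n.
Definition nn1 : 'I_n.+1 := ord_max.

Lemma V1E : V1 = [set nn1].
Proof.
apply/setP => v; rewrite !inE; apply/andP/eqP => [[v1 vn]|->].
  apply: ord_inj => /=; apply/(prime_nt_dvdP pn) => //; by rewrite neq_ltn v1 orbT.
by rewrite /= prime_gt1.
Qed.

Lemma iso1 v : v \in V1 -> isolated V1 E1 v.
Proof.
rewrite V1E inE => /eqP->; rewrite /isolated inE eqxx /=.
apply/forallP => u; rewrite /is_edge !inE.
by case: (eqVneq u nn1) => [->|]; rewrite ?eqxx ?andbF.
Qed.

Lemma code_of1 (Cov : {set {set 'I_n.+1}}) s :
  code_of (V := V1) (e := E1) (S := Cov) s = [:: 1%N].
Proof.
rewrite /code_of.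
have -> : enum V1 = [:: nn1] by rewrite V1E enum_set1.
rewrite /= /label iso1 //.
by rewrite V1E inE.
Qed.

Lemma code1 : code V1 E1 = [:: 1%N].
Proof.
pose S1 : {set {set 'I_n.+1}} := [set [set nn1]].
have tcc1 : total_clique_covering V1 E1 S1.
  apply/and3P; split.
  - apply/forallP => X; apply/implyP; rewrite inE => /eqP->.
    apply/andP; split; first by rewrite V1E.
    apply/forallP => x; apply/implyP; rewrite inE => /eqP->.
    apply/forallP => y; apply/implyP; rewrite inE => /eqP->.
    by rewrite eqxx.
  - apply/forallP => v; apply/implyP => vV; apply/existsP; exists [set nn1].
    by rewrite !inE eqxx /=; move: vV; rewrite V1E inE.
  - apply/forallP => x; apply/forallP => y; apply/implyP.
    rewrite /is_edge V1E !inE => /and4P[/eqP-> /eqP->]; by rewrite eqxx.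
have min1 : min_tcc V1 E1 S1.
  rewrite /min_tcc tcc1 /=; apply/forallP => S'; apply/implyP.
  case/and3P => _ /forallP/(_ nn1) + _; rewrite V1E inE eqxx /= => /existsP[X /andP[XS _]].
  rewrite cards1 card_gt0; apply/set0Pn; by exists X.
apply: lexmin_const.
  apply/negP => /eqP E0.
  have : code_of (V := V1) (e := E1) (S := S1) 1 \in all_codes V1 E1.
    apply/flatten_mapP; exists S1; first by rewrite mem_enum inE.
    by apply: map_f; rewrite mem_enum inE.
  by rewrite E0.
move=> d /flatten_mapP[Cov _] /mapP[s _ ->]; exact: code_of1.
Qed.

Lemma F_prime N : F_Gn N n = 1%R.
Proof.
rewrite /F_Gn /normal_poly_N -/V1 -/E1 code1 big_seq1 /monomial_N.
have -> : primes 1 = [::] by [].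
by rewrite big_nil.
Qed.

End PrimeCase.

Local Open Scope ring_scope.

Theorem theorem5 (n k : nat) (p r : nat -> nat) :
  (1 <= k)%N ->
  (forall i, (i < k)%N -> prime (p i)) ->
  (forall i j, (i < k)%N -> (j < k)%N -> p i = p j -> i = j) ->
  (forall i j, (i <= j)%N -> (j < k)%N -> (r j <= r i)%N) ->
  (forall i, (i < k)%N -> (1 <= r i)%N) ->
  n = (\prod_(i < k) p i ^ r i)%N ->
  (~~ prime n ->
     forall N : nat, (k <= N)%N ->
       F_Gn N n =
       \sum_(I : {set 'I_N} | (I != set0) && [forall i in I, (i < k)%N])
          \prod_(i in I) ((r i)%:R * 'X_i)) /\
  (prime n -> forall N : nat, F_Gn N n = 1).
Proof.
move=> k1 pP pinj rmono rpos nE; split.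
  move=> npn N kN; exact: (F_nonprime _ _ _ _ pP pinj rpos nE rmono k1 npn _ kN).
move=> pn N; exact: F_prime.
Qed.
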